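(* Let $X,Y$ be real Banach spaces and let $H$ be a closed subspace of $L(X,Y)$ with $X^*\otimes Y\subseteq H$ such that $H$ has octahedral norm. Assume that the norm of $X^*$ is non-rough. Then $Y$ has octahedral norm.
   Context: The norm of a Banach space $Z$ is octahedral if for every finite-dimensional subspace $E$ and $\varepsilon>0$ there is $y\in S_Z$ with $\|x+\lambda y\|\ge(1-\varepsilon)(\|x\|+|\lambda|)$ for all $x\in E$, scalars $\lambda$. For $u\in S_Z$, the roughness of $Z$ at $u$ is $\eta(Z,u)=\limsup_{\|h\|\to0}\frac{\|u+h\|+\|u-h\|-2}{\|h\|}$. $Z$ is $\varepsilon$-rough if $\eta(Z,u)\ge\varepsilon$ for every $u\in S_Z$; $Z$ (its norm) is rough if it is $\varepsilon$-rough for some $\varepsilon>0$, and non-rough otherwise. $X^*\otimes Y$ is the space of finite-rank operators spanned by $x\mapsto x^*(x)y$. *)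

(* Defs.v *)
From Stdlib Require Import Reals Lra ClassicalEpsilon.
Open Scope R_scope.

Record NormedSpace := {
  car :> Type;
  zero : car;
  add : car -> car -> car;
  opp : car -> car;
  scal : R -> car -> car;
  norm : car -> R;
  add_assoc : forall x y z, add (add x y) z = add x (add y z);
  add_comm : forall x y, add x y = add y x;
  add_zero : forall x, add x zero = x;
  add_opp : forall x, add x (opp x) = zero;
  scal_assoc : forall a b x, scal a (scal b x) = scal (a * b) x;
  scal_one : forall x, scal 1 x = x;
  scal_distr_l : forall a x y, scal a (add x y) = add (scal a x) (scal a y);
  scal_distr_r : forall a b x, scal (a + b) x = add (scal a x) (scal b x);
  norm_eq0 : forall x, norm x = 0 -> x = zero;
  norm_scal : forall a x, norm (scal a x) = Rabs a * norm x;
  norm_triangle : forall x y, norm (add x y) <= norm x + norm y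
}.

Arguments zero {n}.
Arguments add {n}.
Arguments opp {n}.
Arguments scal {n}.
Arguments norm {n}.

Definition Cauchy_seq {X : NormedSpace} (u : nat -> X) : Prop :=
  forall eps, 0 < eps -> exists N, forall m n, (N <= m)%nat -> (N <= n)%nat ->
    norm (add (u m) (opp (u n))) < eps.

Definition converges_to {X : NormedSpace} (u : nat -> X) (l : X) : Prop :=
  forall eps, 0 < eps -> exists N, forall n, (N <= n)%nat ->
    norm (add (u n) (opp l)) < eps.

Definition Banach (X : NormedSpace) : Prop :=
  forall u : nat -> X, Cauchy_seq u -> exists l, converges_to u l.

Definition R_NormedSpace : NormedSpace.
Proof.
  refine (@Build_NormedSpace R 0 Rplus Ropp Rmult Rabs _ _ _ _ _ _ _ _ _ _ _).
  - intros; ring.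
  - intros; ring.
  - intros; ring.
  - intros; ring.
  - intros; ring.
  - intros; ring.
  - intros; ring.
  - intros; ring.
  - intros x Hx. destruct (Rcase_abs x); unfold Rabs in Hx;
      destruct (Rcase_abs x); lra.
  - intros; apply Rabs_mult.
  - intros; apply Rabs_triang.
Defined.

(* A "vector structure" with a norm-like function, used to speak about
   (subspaces of) spaces of operators, whose elements are functions. *)
Record VStruct := {
  vcar :> Type;
  vzero : vcar;
  vadd : vcar -> vcar -> vcar;
  vscal : R -> vcar -> vcar;
  vnorm : vcar -> R
}.
Arguments vzero {v}.
Arguments vadd {v}.
Arguments vscal {v}.
Arguments vnorm {v}.

Definition VS_of (X : NormedSpace) : VStruct :=
  @Build_VStruct X zero add scal norm.

Fixpoint lincomb {V : VStruct} (n : nat) (c : nat -> R) (e : nat -> V) : V :=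
  match n with
  | O => vzero
  | S k => vadd (lincomb k c e) (vscal (c k) (e k))
  end.

Definition octahedral_in (V : VStruct) (P : V -> Prop) : Prop :=
  forall (n : nat) (e : nat -> V), (forall i, (i < n)%nat -> P (e i)) ->
  forall eps, 0 < eps ->
  exists y, P y /\ vnorm y = 1 /\
    forall (c : nat -> R) (lam : R),
      vnorm (vadd (lincomb n c e) (vscal lam y))
        >= (1 - eps) * (vnorm (lincomb n c e) + Rabs lam).

Definition octahedral (X : NormedSpace) : Prop :=
  octahedral_in (VS_of X) (fun _ => True).

(* eta(P, u) >= eps, where
   eta(P,u) = limsup_{||h||->0, h in P} (||u+h|| + ||u-h|| - 2)/||h||,
   unfolded: for every delta > 0 the supremum over 0 < ||h|| < delta of the
   quotient is >= eps. *)
Definition roughness_ge (V : VStruct) (P : V -> Prop) (u : V) (eps : R) : Prop :=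
  forall delta, 0 < delta -> forall eps', eps' < eps ->
  exists h, P h /\ 0 < vnorm h /\ vnorm h < delta /\
    (vnorm (vadd u h) + vnorm (vadd u (vscal (-1) h)) - 2) / vnorm h > eps'.

Definition rough_in (V : VStruct) (P : V -> Prop) : Prop :=
  exists eps, 0 < eps /\
    forall u, P u -> vnorm u = 1 -> roughness_ge V P u eps.

Definition is_linear {X Y : NormedSpace} (T : X -> Y) : Prop :=
  (forall x y, T (add x y) = add (T x) (T y)) /\
  (forall a x, T (scal a x) = scal a (T x)).

Definition is_bounded {X Y : NormedSpace} (T : X -> Y) : Prop :=
  exists M, forall x, norm (T x) <= M * norm x.

Definition bounded_linear {X Y : NormedSpace} (T : X -> Y) : Prop :=
  is_linear T /\ is_bounded T.

(* Operator norm: sup { ||T x|| : ||x|| <= 1 } (well defined for bounded T). *)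
Definition opnorm {X Y : NormedSpace} (T : X -> Y) : R :=
  epsilon (inhabits 0)
    (fun r => is_lub (fun s => exists x : X, norm x <= 1 /\ s = norm (T x)) r).

(* The ambient structure of operators X -> Y with pointwise operations and
   the operator norm; L(X,Y) is the subset of bounded linear ones. *)
Definition Op_VS (X Y : NormedSpace) : VStruct :=
  @Build_VStruct (X -> Y) (fun _ => zero) (fun S T x => add (S x) (T x))
    (fun a T x => scal a (T x)) opnorm.

Definition closed_subspace_L (X Y : NormedSpace) (H : (X -> Y) -> Prop) : Prop :=
  (forall T, H T -> bounded_linear T) /\
  H (fun _ => zero) /\
  (forall S T, H S -> H T -> H (fun x => add (S x) (T x))) /\
  (forall a T, H T -> H (fun x => scal a (T x))) /\
  (forall (Tn : nat -> X -> Y) (T : X -> Y),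
     (forall n, H (Tn n)) -> bounded_linear T ->
     (forall eps, 0 < eps -> exists N, forall n, (N <= n)%nat ->
        opnorm (fun x => add (Tn n x) (opp (T x))) < eps) ->
     H T).

(* X^* (x) Y is contained in H: every rank-one operator x |-> x^*(x) y. *)
Definition contains_finite_rank (X Y : NormedSpace) (H : (X -> Y) -> Prop) : Prop :=
  forall (f : X -> R_NormedSpace) (y : Y),
    bounded_linear f -> H (fun x => scal (f x) y).

Definition dual_VS (X : NormedSpace) : VStruct := Op_VS X R_NormedSpace.
Definition in_dual (X : NormedSpace) : (X -> R_NormedSpace) -> Prop :=
  fun f => bounded_linear f.

(* Main.v *)
Require Import Defs.
From Stdlib Require Import Reals.
From Stdlib Require Import Lra ClassicalEpsilon Classical FunctionalExtensionality Lia.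
From mathcomp Require boolp classical_sets.
Open Scope R_scope.


Lemma my_zorn (T:Type) (t0:T) (Rl : T -> T -> Prop) :
  (forall t, Rl t t) -> (forall r s t, Rl r s -> Rl s t -> Rl r t) ->
  (forall A : T -> Prop, (forall s t, A s -> A t -> Rl s t \/ Rl t s) -> exists t, forall s, A s -> Rl s t) ->
  exists t, forall s, Rl t s -> Rl s t.
Proof.
  intros Hr Ht Hc.
  pose (Rb := fun a b => boolp.asbool (Rl a b)).
  assert (E : forall a b, Rb a b = true <-> Rl a b).
  { intros a b. unfold Rb. split; intro H.
    - apply (Bool.reflect_iff _ _ (boolp.asboolP (Rl a b))); exact H.
    - apply (Bool.reflect_iff _ _ (boolp.asboolP (Rl a b))); exact H. }
  destruct (@classical_sets.ZL_preorder T t0 Rb) as [t Ht0].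
  - intro; apply E; auto.
  - intros r s u H1 H2; apply E; apply E in H1; apply E in H2; eauto.
  - intros A HA. destruct (Hc A) as [t Htt].
    + intros s u As Au. destruct (HA s u As Au) as [h|h]; [left|right]; apply E; exact h.
    + exists t; intros; apply E; auto.
  - exists t. intros s Hs. apply E. apply Ht0. apply E. exact Hs.
Qed.

Lemma Rabs_m1 : Rabs (-1) = 1.
Proof. unfold Rabs; destruct (Rcase_abs (-1)); lra. Qed.

Section Basic.
Variable X : NormedSpace.
Implicit Types x y z : X.

Lemma add_zero_l x : add zero x = x.
Proof. rewrite add_comm; apply add_zero. Qed.

Lemma add_cancel_l x y z : add x y = add x z -> y = z.
Proof.
  intro H. assert (H2: add (opp x) (add x y) = add (opp x) (add x z)) by (rewrite H; reflexivity).
  rewrite <- !add_assoc in H2. rewrite (add_comm _ (opp x) x), add_opp, !add_zero_l in H2. exact H2.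
Qed.

Lemma scal_zero_l x : scal 0 x = zero.
Proof.
  apply (add_cancel_l (scal 0 x)). rewrite add_zero, <- scal_distr_r. f_equal; ring.
Qed.

Lemma scal_zero_r a : scal a (@zero X) = zero.
Proof.
  apply (add_cancel_l (scal a zero)). rewrite add_zero, <- scal_distr_l, add_zero. reflexivity.
Qed.

Lemma opp_scal x : opp x = scal (-1) x.
Proof.
  apply (add_cancel_l x). rewrite add_opp. rewrite <- (scal_one _ x) at 1.
  rewrite <- scal_distr_r. replace (1 + -1) with 0 by ring. symmetry; apply scal_zero_l.
Qed.

Lemma norm_zero : norm (@zero X) = 0.
Proof. rewrite <- (scal_zero_l zero), norm_scal, Rabs_R0; ring. Qed.

Lemma norm_opp x : norm (scal (-1) x) = norm x.
Proof. rewrite norm_scal, Rabs_m1; ring. Qed.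

Lemma sub_self x : add x (scal (-1) x) = zero.
Proof. rewrite <- opp_scal; apply add_opp. Qed.

Lemma norm_nonneg x : 0 <= norm x.
Proof.
  pose proof (norm_triangle _ x (scal (-1) x)) as H.
  rewrite sub_self, norm_zero, norm_opp in H. lra.
Qed.

Lemma norm_rev x y : norm x - norm y <= norm (add x y).
Proof.
  pose proof (norm_triangle _ (add x y) (scal (-1) y)) as H.
  rewrite add_assoc, sub_self, add_zero, norm_opp in H. lra.
Qed.

Lemma norm_rev2 x y : norm y - norm x <= norm (add x y).
Proof. rewrite add_comm; apply norm_rev. Qed.

Lemma scal_opp_add a x : add (scal a x) (scal (-a) x) = zero.
Proof. rewrite <- scal_distr_r. replace (a + - a) with 0 by ring. apply scal_zero_l. Qed.

Lemma norm_pos_neq x : x <> zero -> 0 < norm x.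
Proof.
  intro H. destruct (norm_nonneg x) as [h|h]; [exact h|].
  exfalso; apply H; apply norm_eq0; auto.
Qed.

Lemma scal_inj a b x : x <> zero -> scal a x = scal b x -> a = b.
Proof.
  intros Hx H. destruct (Req_dec a b) as [e|ne]; [exact e|exfalso].
  assert (E: scal (a - b) x = zero).
  { unfold Rminus. rewrite scal_distr_r, H. apply scal_opp_add. }
  assert (E2: scal (/(a-b)) (scal (a-b) x) = x).
  { rewrite scal_assoc. rewrite Rinv_l by lra. apply scal_one. }
  rewrite E, scal_zero_r in E2. auto.
Qed.

End Basic.


Section HBsec.
Variable X : NormedSpace.
Implicit Types x y z : X.

Lemma add_swap (a b c d : X) : add (add a b) (add c d) = add (add a c) (add b d).
Proof.
  rewrite !add_assoc. f_equal. rewrite <- !add_assoc. f_equal. apply add_comm.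
Qed.

Lemma add_eq_zero u v : add u v = (@zero X) -> v = scal (-1) u.
Proof.
  intro H. apply (add_cancel_l _ u). rewrite H. symmetry. apply sub_self.
Qed.

Lemma sub_zero_eq u v : add u (scal (-1) v) = (@zero X) -> u = v.
Proof.
  intro H. apply add_eq_zero in H. assert (H2 := f_equal (scal (-1)) H).
  rewrite !scal_assoc in H2. replace (-1 * -1) with 1 in H2 by ring. rewrite !scal_one in H2. auto.
Qed.

Lemma comb_add x a y b z : add (add x (scal a z)) (add y (scal b z)) = add (add x y) (scal (a+b) z).
Proof. rewrite add_swap, scal_distr_r. reflexivity. Qed.

Lemma comb_scal t x a z : scal t (add x (scal a z)) = add (scal t x) (scal (t*a) z).
Proof. rewrite scal_distr_l, scal_assoc. reflexivity. Qed.

Lemma comb_diff x a x' a' z :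
  add (add x (scal a z)) (scal (-1) (add x' (scal a' z))) =
  add (add x (scal (-1) x')) (scal (a - a') z).
Proof.
  rewrite comb_scal, comb_add. f_equal. f_equal. ring.
Qed.

Variable w : X.

Record PExt := { pD : X -> Prop; pf : X -> R;
 pD0 : pD zero; pDadd : forall x y, pD x -> pD y -> pD (add x y);
 pDscal : forall a x, pD x -> pD (scal a x);
 pfadd : forall x y, pD x -> pD y -> pf (add x y) = pf x + pf y;
 pfscal : forall a x, pD x -> pf (scal a x) = a * pf x;
 pfle : forall x, pD x -> pf x <= norm x;
 pw : pD w; pfw : pf w = norm w }.

Definition ple (p q : PExt) := (forall x, pD p x -> pD q x) /\ (forall x, pD p x -> pf q x = pf p x).

Hypothesis wnz : w <> zero.

Definition D0 x := exists t, x = scal t w.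
Definition f0 x := epsilon (inhabits 0) (fun r => exists t, x = scal t w /\ r = t * norm w).

Lemma f0_spec t : f0 (scal t w) = t * norm w.
Proof.
  unfold f0. assert (HE: exists r, exists t0, scal t w = scal t0 w /\ r = t0 * norm w) by (exists (t * norm w); exists t; auto).
  destruct (epsilon_spec (inhabits 0) _ HE) as [t' [E1 E2]].
  rewrite E2. apply scal_inj in E1; auto. subst; auto.
Qed.

Definition base : PExt.
Proof.
  refine (Build_PExt D0 f0 _ _ _ _ _ _ _ _).
  - exists 0. symmetry; apply scal_zero_l.
  - intros x y [t ->] [s ->]. exists (t+s). rewrite scal_distr_r; auto.
  - intros a x [t ->]. exists (a*t). apply scal_assoc.
  - intros x y [t ->] [s ->]. rewrite <- scal_distr_r, !f0_spec. ring.
  - intros a x [t ->]. rewrite scal_assoc, !f0_spec. ring.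
  - intros x [t ->]. rewrite f0_spec, norm_scal. pose proof (norm_nonneg _ w).
    pose proof (Rle_abs t). nra.
  - exists 1. symmetry; apply scal_one.
  - rewrite <- (scal_one _ w) at 1. rewrite f0_spec. ring.
Defined.

Lemma chain_ub (A : PExt -> Prop) : (forall s t, A s -> A t -> ple s t \/ ple t s) ->
  exists u, forall s, A s -> ple s u.
Proof.
  intro Hch. destruct (classic (exists p, A p)) as [[p0 Ap0]|Hno].
  2:{ exists base. intros s As. exfalso; apply Hno; eauto. }
  pose (D := fun x => exists p, A p /\ pD p x).
  pose (f := fun x => epsilon (inhabits 0) (fun r => exists p, A p /\ pD p x /\ pf p x = r)).
  assert (Hf : forall p x, A p -> pD p x -> f x = pf p x).
  { intros p x Ap Dx. unfold f.
    assert (HE: exists r, exists p, A p /\ pD p x /\ pf p x = r) by (exists (pf p x); exists p; auto).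
    destruct (epsilon_spec (inhabits 0) _ HE) as [q [Aq [Dq Eq]]].
    rewrite <- Eq. destruct (Hch p q Ap Aq) as [[h1 h2]|[h1 h2]].
    + apply h2; auto.
    + symmetry; apply h2; auto. }
  assert (Hcomb : forall x y, D x -> D y -> exists r, A r /\ pD r x /\ pD r y).
  { intros x y [p [Ap Dx]] [q [Aq Dy]]. destruct (Hch p q Ap Aq) as [[h1 h2]|[h1 h2]].
    - exists q; auto.
    - exists p; auto. }
  assert (H1 : D zero) by (exists p0; split; auto; apply pD0).
  assert (H2 : forall x y, D x -> D y -> D (add x y)).
  { intros x y Dx Dy. destruct (Hcomb x y Dx Dy) as [r [Ar [Rx Ry]]]. exists r; split; auto. apply pDadd; auto. }
  assert (H3 : forall a x, D x -> D (scal a x)).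
  { intros a x [p [Ap Dx]]. exists p; split; auto. apply pDscal; auto. }
  assert (H4 : forall x y, D x -> D y -> f (add x y) = f x + f y).
  { intros x y Dx Dy. destruct (Hcomb x y Dx Dy) as [r [Ar [Rx Ry]]].
    rewrite (Hf r (add x y)), (Hf r x), (Hf r y); auto. apply pfadd; auto. apply pDadd; auto. }
  assert (H5 : forall a x, D x -> f (scal a x) = a * f x).
  { intros a x [p [Ap Dx]]. rewrite (Hf p (scal a x)), (Hf p x); auto. apply pfscal; auto. apply pDscal; auto. }
  assert (H6 : forall x, D x -> f x <= norm x).
  { intros x [p [Ap Dx]]. rewrite (Hf p x); auto. apply pfle; auto. }
  assert (H7 : D w) by (exists p0; split; auto; apply pw).
  assert (H8 : f w = norm w) by (rewrite (Hf p0 w); auto; [apply pfw | apply pw]).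
  exists (Build_PExt D f H1 H2 H3 H4 H5 H6 H7 H8).
  intros s As. split; simpl.
  - intros x Dx; exists s; auto.
  - intros x Dx. apply Hf; auto.
Qed.


Lemma ext_step (p : PExt) z : ~ pD p z -> exists q, ple p q /\ pD q z.
Proof.
  intro Hz.
  set (S0 := fun r => exists x, pD p x /\ r = pf p x - norm (add x (scal (-1) z))).
  assert (Key : forall x y, pD p x -> pD p y -> pf p x - norm (add x (scal (-1) z)) <= norm (add y z) - pf p y).
  { intros x y Dx Dy.
    assert (E : add (add x (scal (-1) z)) (add y z) = add x y).
    { rewrite add_swap. rewrite (add_comm _ (scal (-1) z) z), sub_self, add_zero. reflexivity. }
    pose proof (norm_triangle _ (add x (scal (-1) z)) (add y z)) as T. rewrite E in T.
    pose proof (pfle p (add x y) (pDadd p x y Dx Dy)). rewrite pfadd in H; auto. lra. }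
  assert (Hb : bound S0).
  { exists (norm (add zero z) - pf p zero). intros r [x [Dx ->]]. apply Key; auto. apply pD0. }
  assert (Hne : exists r, S0 r).
  { exists (pf p zero - norm (add zero (scal (-1) z))). exists zero; split; auto. apply pD0. }
  destruct (completeness S0 Hb Hne) as [c [Hc1 Hc2]].
  assert (C1 : forall x, pD p x -> pf p x - norm (add x (scal (-1) z)) <= c).
  { intros x Dx. apply Hc1. exists x; auto. }
  assert (C2 : forall y, pD p y -> c <= norm (add y z) - pf p y).
  { intros y Dy. apply Hc2. intros r [x [Dx ->]]. apply Key; auto. }
  assert (Uniq : forall x a x' a', pD p x -> pD p x' -> add x (scal a z) = add x' (scal a' z) -> a = a' /\ x = x').
  { intros x a x' a' Dx Dx' E.
    assert (E2 : add (add x (scal a z)) (scal (-1) (add x' (scal a' z))) = zero) by (rewrite E; apply sub_self).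
    rewrite comb_diff in E2. apply add_eq_zero in E2.
    destruct (Req_dec a a') as [e|ne].
    - split; auto. subst a'. replace (a - a) with 0 in E2 by ring. rewrite scal_zero_l in E2.
      symmetry in E2. assert (E3 := f_equal (scal (-1)) E2). rewrite scal_zero_r, scal_assoc in E3.
      replace (-1 * -1) with 1 in E3 by ring. rewrite scal_one in E3. symmetry in E3. apply sub_zero_eq; auto.
    - exfalso. apply Hz.
      assert (Ez : z = scal (/(a - a')) (scal (-1) (add x (scal (-1) x')))).
      { rewrite <- E2, scal_assoc, Rinv_l by lra. symmetry; apply scal_one. }
      rewrite Ez. apply pDscal. apply pDscal. apply pDadd; auto. apply pDscal; auto. }
  set (D' := fun v => exists x a, pD p x /\ v = add x (scal a z)).
  set (f' := fun v => epsilon (inhabits 0) (fun r => exists x a, pD p x /\ v = add x (scal a z) /\ r = pf p x + a * c)).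
  assert (Hf : forall x a, pD p x -> f' (add x (scal a z)) = pf p x + a * c).
  { intros x a Dx. unfold f'.
    assert (HE : exists r, exists x0 a0, pD p x0 /\ add x (scal a z) = add x0 (scal a0 z) /\ r = pf p x0 + a0 * c)
      by (exists (pf p x + a * c); exists x, a; auto).
    destruct (epsilon_spec (inhabits 0) _ HE) as [x0 [a0 [D0' [E1 E2]]]].
    rewrite E2. destruct (Uniq x a x0 a0 Dx D0' E1) as [-> ->]. reflexivity. }
  assert (H1 : D' zero) by (exists zero, 0; split; [apply pD0| rewrite scal_zero_l, add_zero; auto]).
  assert (H2 : forall u v, D' u -> D' v -> D' (add u v)).
  { intros u v [x [a [Dx ->]]] [y [b [Dy ->]]]. exists (add x y), (a+b). split; [apply pDadd; auto| apply comb_add]. }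
  assert (H3 : forall t u, D' u -> D' (scal t u)).
  { intros t u [x [a [Dx ->]]]. exists (scal t x), (t*a). split; [apply pDscal; auto| apply comb_scal]. }
  assert (H4 : forall u v, D' u -> D' v -> f' (add u v) = f' u + f' v).
  { intros u v [x [a [Dx ->]]] [y [b [Dy ->]]]. rewrite comb_add, !Hf; auto.
    rewrite pfadd; auto. ring. apply pDadd; auto. }
  assert (H5 : forall t u, D' u -> f' (scal t u) = t * f' u).
  { intros t u [x [a [Dx ->]]]. rewrite comb_scal, !Hf; auto. rewrite pfscal; auto. ring. apply pDscal; auto. }
  assert (H6 : forall u, D' u -> f' u <= norm u).
  { intros u [x [a [Dx ->]]]. rewrite Hf; auto.
    destruct (Rtotal_order a 0) as [Hn|[H0|Hp]].
    - set (b := - a). assert (Hb0 : 0 < b) by (unfold b; lra).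
      pose proof (C1 (scal (/b) x) (pDscal p _ _ Dx)) as C. rewrite pfscal in C; auto.
      assert (E : add (scal (/b) x) (scal (-1) z) = scal (/b) (add x (scal a z))).
      { rewrite comb_scal. f_equal. f_equal. unfold b. field. lra. }
      rewrite E, norm_scal, Rabs_right in C by (left; apply Rinv_0_lt_compat; lra).
      assert (C' := Rmult_le_compat_l b _ _ (Rlt_le _ _ Hb0) C).
      replace (b * (/ b * pf p x - / b * norm (add x (scal a z)))) with (pf p x - norm (add x (scal a z))) in C' by (field; lra).
      unfold b in C'. lra.
    - subst a. rewrite scal_zero_l, add_zero. pose proof (pfle p x Dx). lra.
    - pose proof (C2 (scal (/a) x) (pDscal p _ _ Dx)) as C. rewrite pfscal in C; auto.
      assert (E : add (scal (/a) x) z = scal (/a) (add x (scal a z))).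
      { rewrite comb_scal. f_equal. rewrite Rinv_l by lra. symmetry; apply scal_one. }
      rewrite E, norm_scal, Rabs_right in C by (left; apply Rinv_0_lt_compat; lra).
      assert (C' := Rmult_le_compat_l a _ _ (Rlt_le _ _ Hp) C).
      replace (a * (/ a * norm (add x (scal a z)) - / a * pf p x)) with (norm (add x (scal a z)) - pf p x) in C' by (field; lra).
      lra. }
  assert (Ex0 : forall x, x = add x (scal 0 z)) by (intro; rewrite scal_zero_l, add_zero; auto).
  assert (H7 : D' w) by (exists w, 0; split; [apply pw| apply Ex0]).
  assert (H8 : f' w = norm w) by (rewrite (Ex0 w), Hf; [rewrite pfw; rewrite <- Ex0; ring| apply pw]).
  exists (Build_PExt D' f' H1 H2 H3 H4 H5 H6 H7 H8). split; [split|]; simpl.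
  - intros x Dx. exists x, 0; auto.
  - intros x Dx. rewrite (Ex0 x), Hf; auto. rewrite <- Ex0. ring.
  - exists zero, 1. split; [apply pD0|]. rewrite scal_one, add_zero_l. auto.
Qed.

Lemma HB_nz : exists g : X -> R, (forall x y, g (add x y) = g x + g y) /\ (forall a x, g (scal a x) = a * g x) /\
  (forall x, g x <= norm x) /\ g w = norm w.
Proof.
  destruct (my_zorn PExt base ple) as [m Hm].
  - intro; split; auto.
  - intros r s t [a1 a2] [b1 b2]. split; auto. intros x Dx. rewrite b2; auto.
  - apply chain_ub.
  - assert (All : forall x, pD m x).
    { intro z. apply NNPP. intro Hz. destruct (ext_step m z Hz) as [q [Hq Dq]].
      apply Hz. apply (proj1 (Hm q Hq)); auto. }
    exists (pf m). repeat split; intros; [apply pfadd|apply pfscal|apply pfle|apply pfw]; auto.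
Qed.

End HBsec.


Lemma HB (X : NormedSpace) (w : X) : exists g : X -> R, (forall x y, g (add x y) = g x + g y) /\ (forall a x, g (scal a x) = a * g x) /\
  (forall x, Rabs (g x) <= norm x) /\ g w = norm w.
Proof.
  destruct (classic (w = zero)) as [->|wnz].
  - exists (fun _ => 0). repeat split; intros; try ring. rewrite Rabs_R0; apply norm_nonneg. rewrite norm_zero; auto.
  - destruct (HB_nz X w wnz) as [g [g1 [g2 [g3 g4]]]]. exists g. repeat split; auto.
    intro x. apply Rabs_le. split; auto. pose proof (g3 (scal (-1) x)). rewrite g2, norm_opp in H. lra.
Qed.

Section Op.
Variables X Y : NormedSpace.

Definition ballset (T : X -> Y) := fun s => exists x : X, norm x <= 1 /\ s = norm (T x).

Lemma opnorm_lub (T : X -> Y) : is_bounded T -> is_lub (ballset T) (opnorm T).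
Proof.
  intros [M HM]. unfold opnorm.
  assert (Hex : exists r, is_lub (ballset T) r).
  { destruct (completeness (ballset T)) as [r Hr].
    - exists (Rabs M). intros s [x [Hx ->]]. pose proof (HM x). pose proof (norm_nonneg _ x).
      pose proof (Rle_abs M). pose proof (Rabs_pos M). nra.
    - exists (norm (T zero)). exists zero. split; auto. rewrite norm_zero; lra.
    - exists r; auto. }
  exact (epsilon_spec (inhabits 0) _ Hex).
Qed.

Lemma opnorm_ub (T : X -> Y) x : is_bounded T -> norm x <= 1 -> norm (T x) <= opnorm T.
Proof. intros Hb Hx. apply (proj1 (opnorm_lub T Hb)). exists x; auto. Qed.

Lemma opnorm_le (T : X -> Y) M : is_bounded T -> (forall x, norm x <= 1 -> norm (T x) <= M) -> opnorm T <= M.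
Proof. intros Hb H. apply (proj2 (opnorm_lub T Hb)). intros s [x [Hx ->]]. auto. Qed.

Lemma opnorm_approx (T : X -> Y) eta : is_bounded T -> 0 < eta -> exists x, norm x <= 1 /\ opnorm T - eta < norm (T x).
Proof.
  intros Hb He. apply NNPP. intro Hn.
  assert (opnorm T <= opnorm T - eta).
  { apply opnorm_le; auto. intros x Hx. apply Rnot_lt_le. intro. apply Hn. exists x; auto. }
  lra.
Qed.

Lemma opnorm_nonneg (T : X -> Y) : is_bounded T -> 0 <= opnorm T.
Proof. intro Hb. pose proof (opnorm_ub T zero Hb). rewrite norm_zero in H. pose proof (norm_nonneg _ (T zero)). lra. Qed.

Lemma lin_zero (T : X -> Y) : is_linear T -> T zero = zero.
Proof. intros [_ H]. rewrite <- (scal_zero_l _ zero), H. apply scal_zero_l. Qed.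

Lemma opnorm_mul (T : X -> Y) x : bounded_linear T -> norm (T x) <= opnorm T * norm x.
Proof.
  intros [Hl Hb]. destruct (classic (x = zero)) as [->|nz].
  - rewrite lin_zero, !norm_zero; auto. lra.
  - pose proof (norm_pos_neq _ x nz) as Hp.
    assert (Ex : x = scal (norm x) (scal (/ norm x) x)).
    { rewrite scal_assoc, Rinv_r by lra. symmetry; apply scal_one. }
    assert (Hu : norm (scal (/ norm x) x) <= 1).
    { rewrite norm_scal, Rabs_right by (left; apply Rinv_0_lt_compat; lra). rewrite Rinv_l; lra. }
    pose proof (opnorm_ub T _ Hb Hu). rewrite Ex at 1. rewrite (proj2 Hl), norm_scal, Rabs_right by lra. nra.
Qed.

Lemma bl_add (S T : X -> Y) : bounded_linear S -> bounded_linear T -> bounded_linear (fun x => add (S x) (T x)).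
Proof.
  intros [[Sa Ss] [M1 HM1]] [[Ta Ts] [M2 HM2]]. split; [split|].
  - intros x y. rewrite Sa, Ta. apply add_swap.
  - intros a x. rewrite Ss, Ts, scal_distr_l. reflexivity.
  - exists (M1 + M2). intro x. pose proof (norm_triangle _ (S x) (T x)). pose proof (HM1 x). pose proof (HM2 x). nra.
Qed.

Lemma bl_scal a (T : X -> Y) : bounded_linear T -> bounded_linear (fun x => scal a (T x)).
Proof.
  intros [[Ta Ts] [M HM]]. split; [split|].
  - intros x y. rewrite Ta, scal_distr_l. reflexivity.
  - intros b x. rewrite Ts, !scal_assoc. f_equal. ring.
  - exists (Rabs a * M). intro x. rewrite norm_scal. pose proof (HM x). pose proof (Rabs_pos a). nra.
Qed.

End Op.


Lemma RN_norm (r : R_NormedSpace) : norm r = Rabs r. Proof. reflexivity. Qed.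
Lemma RN_add (r s : R_NormedSpace) : add r s = (r + s)%R. Proof. reflexivity. Qed.
Lemma RN_scal a (r : R_NormedSpace) : scal a r = (a * r)%R. Proof. reflexivity. Qed.

Lemma slice (X : NormedSpace) (xs : X -> R_NormedSpace) (d e' e0 al : R) :
  bounded_linear xs -> 0 < d -> e' < e0 -> 0 < e0 -> 0 <= al ->
  (forall h : X -> R_NormedSpace, bounded_linear h -> 0 < opnorm h -> opnorm h < d ->
     (opnorm (fun x => add (xs x) (h x)) + opnorm (fun x => add (xs x) (scal (-1) (h x))) - 2) / opnorm h <= e') ->
  forall x1 x2 : X, norm x1 <= 1 -> norm x2 <= 1 -> 1 - al <= xs x1 -> 1 - al <= xs x2 ->
  norm (add x1 (scal (-1) x2)) <= e0 + 4 * al / d.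
Proof.
  intros Hxs Hd He He0 Hal P x1 x2 N1 N2 S1 S2.
  set (w := add x1 (scal (-1) x2)).
  assert (Hq : 0 <= 4 * al / d) by (apply Rmult_le_pos; [lra| left; apply Rinv_0_lt_compat; lra]).
  destruct (norm_nonneg _ w) as [Hw|Hw]; [|rewrite <- Hw; lra].
  destruct (HB X w) as [g [g1 [g2 [g3 g4]]]].
  set (h := fun x : X => (d / 2 * g x) : R_NormedSpace).
  assert (Hbl : bounded_linear h).
  { split; [split|].
    - intros x y. unfold h. rewrite g1. simpl. ring.
    - intros a x. unfold h. rewrite g2. simpl. ring.
    - exists (d/2). intro x. unfold h. simpl. rewrite Rabs_mult, Rabs_right by lra. pose proof (g3 x). nra. }
  assert (Hn : opnorm h = d / 2).
  { apply Rle_antisym.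
    - apply opnorm_le. apply Hbl. intros x Hx. unfold h. simpl. rewrite Rabs_mult, Rabs_right by lra.
      pose proof (g3 x). nra.
    - set (u := scal (/ norm w) w).
      assert (Hu : norm u <= 1).
      { unfold u. rewrite norm_scal, Rabs_right by (left; apply Rinv_0_lt_compat; lra). rewrite Rinv_l; lra. }
      pose proof (opnorm_ub _ _ h u (proj2 Hbl) Hu) as U. unfold h in U. simpl in U. unfold u in U.
      rewrite g2, g4, Rinv_l in U by lra. rewrite Rmult_1_r, Rabs_right in U by lra. exact U. }
  assert (Hp := P h Hbl ltac:(lra) ltac:(lra)). rewrite Hn in Hp.
  assert (Hbl1 := bl_add _ _ xs h Hxs Hbl).
  assert (Hbl2 := bl_add _ _ xs _ Hxs (bl_scal _ _ (-1) h Hbl)).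
  set (A := opnorm (fun x : X => add (xs x) (h x))) in *.
  set (B := opnorm (fun x : X => add (xs x) (scal (-1) (h x)))) in *.
  assert (A1 : Rabs (xs x1 + d/2*g x1) <= A) by exact (opnorm_ub _ _ _ x1 (proj2 Hbl1) N1).
  assert (A2 : Rabs (xs x2 + -1 * (d/2*g x2)) <= B) by exact (opnorm_ub _ _ _ x2 (proj2 Hbl2) N2).
  pose proof (Rle_abs (xs x1 + d / 2 * g x1)) as R1.
  pose proof (Rle_abs (xs x2 + -1 * (d / 2 * g x2))) as R2.
  assert (Gw : g x1 - g x2 = norm w) by (rewrite <- g4; unfold w; rewrite g1, g2; ring).
  assert (Hp2 : A + B - 2 <= e' * (d/2)).
  { apply (Rmult_le_compat_r (d/2)) in Hp; [|lra]. unfold Rdiv at 1 in Hp.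
    rewrite Rmult_assoc, Rinv_l, Rmult_1_r in Hp by lra. exact Hp. }
  assert (e' * (d/2) <= e0 * (d/2)) by (apply Rmult_le_compat_r; lra).
  assert (Hmain : d / 2 * norm w <= e0 * (d/2) + 2 * al) by nra.
  apply (Rmult_le_reg_l (d/2)); [lra|].
  replace (d / 2 * (e0 + 4 * al / d)) with (e0 * (d/2) + 2 * al) by (field; lra). exact Hmain.
Qed.


Lemma LC_eval (X Y : NormedSpace) n c (T : nat -> X -> Y) x :
  lincomb (V:=Op_VS X Y) n c T x = lincomb (V:=VS_of Y) n c (fun i => T i x).
Proof. induction n; simpl; auto. rewrite IHn. reflexivity. Qed.

Lemma LC_scal (Y : NormedSpace) n c (e : nat -> Y) s :
  lincomb (V:=VS_of Y) n c (fun i => scal s (e i)) = scal s (lincomb (V:=VS_of Y) n c e).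
Proof.
  induction n; simpl.
  - symmetry; apply scal_zero_r.
  - rewrite IHn, scal_distr_l, !scal_assoc. f_equal. f_equal. ring.
Qed.

Lemma LC_ext (Y : NormedSpace) n c c' (e e' : nat -> Y) :
  (forall i, (i < n)%nat -> c i = c' i /\ e i = e' i) ->
  lincomb (V:=VS_of Y) n c e = lincomb (V:=VS_of Y) n c' e'.
Proof.
  induction n; simpl; intro H; auto.
  rewrite IHn by (intros; apply H; lia). destruct (H n ltac:(lia)) as [-> ->]. reflexivity.
Qed.

Lemma LC_zero (Y : NormedSpace) n c (e : nat -> Y) :
  (forall i, (i < n)%nat -> c i = 0) -> lincomb (V:=VS_of Y) n c e = zero.
Proof.
  induction n; simpl; intro H; auto.
  rewrite IHn by (intros; apply H; lia). rewrite (H n ltac:(lia)), scal_zero_l. apply add_zero.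
Qed.

Lemma LC_inH (X Y : NormedSpace) (H : (X -> Y) -> Prop) n c (T : nat -> X -> Y) :
  closed_subspace_L X Y H -> (forall i, (i < n)%nat -> H (T i)) -> H (lincomb (V:=Op_VS X Y) n c T).
Proof.
  intros [_ [H0 [Ha [Hs _]]]]. induction n; simpl; intro HT; auto.
  apply Ha. apply IHn; intros; apply HT; lia. apply Hs. apply HT; lia.
Qed.

Lemma func_pos (X : NormedSpace) (xs : X -> R_NormedSpace) b :
  bounded_linear xs -> opnorm xs = 1 -> 0 < b -> exists x, norm x <= 1 /\ 1 - b < xs x.
Proof.
  intros Hb H1 Hpos. destruct (opnorm_approx _ _ xs b (proj2 Hb) Hpos) as [x [Hx Hv]].
  rewrite H1 in Hv. simpl in Hv. destruct (Rle_dec 0 (xs x)).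
  - exists x; split; auto. rewrite Rabs_right in Hv; lra.
  - exists (scal (-1) x). rewrite norm_opp. split; auto. rewrite (proj2 (proj1 Hb)). simpl.
    rewrite Rabs_left in Hv; lra.
Qed.

Lemma func_le1 (X : NormedSpace) (xs : X -> R_NormedSpace) x :
  bounded_linear xs -> opnorm xs = 1 -> norm x <= 1 -> Rabs (xs x) <= 1.
Proof.
  intros Hb H1 Hx. pose proof (opnorm_mul _ _ xs x Hb) as M. rewrite H1 in M. simpl in M. lra.
Qed.

Lemma vec_pert (Y : NormedSpace) (a b c : Y) : add a b = add (add c b) (add a (scal (-1) c)).
Proof.
  rewrite (add_comm _ a (scal (-1) c)), <- add_assoc, (add_assoc _ c b), (add_comm _ b (scal (-1) c)),
    <- add_assoc, sub_self, add_zero_l. apply add_comm.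
Qed.

Lemma norm_sub_le (Y : NormedSpace) (a b : Y) : norm a - norm (add a (scal (-1) b)) <= norm b.
Proof.
  pose proof (norm_triangle _ b (add a (scal (-1) b))).
  assert (E : add b (add a (scal (-1) b)) = a).
  { rewrite (add_comm _ a (scal (-1) b)), <- add_assoc, sub_self, add_zero_l. auto. }
  rewrite E in H. lra.
Qed.

Lemma lemA (X Y : NormedSpace) (xs : X -> R_NormedSpace) (S : X -> Y) (zz : Y) (l e1 : R) :
  bounded_linear xs -> opnorm xs = 1 -> bounded_linear S -> opnorm S = 1 ->
  0 < e1 <= 1 -> 0 < norm zz + Rabs l ->
  bounded_linear (fun x => scal (xs x) zz) ->
  opnorm (fun x => add (scal (xs x) zz) (scal l (S x))) >= (1-e1)*(opnorm (fun x => scal (xs x) zz) + Rabs l) ->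
  exists x, norm x <= 1 /\ 0 <= xs x /\ xs x <= 1 /\ norm (S x) <= 1 /\
    (1 - xs x) * norm zz <= 3*e1*(norm zz + Rabs l) /\
    (1 - norm (S x)) * Rabs l <= 3*e1*(norm zz + Rabs l) /\
    (1 - 3*e1)*(norm zz + Rabs l) <= norm (add (scal (xs x) zz) (scal l (S x))).
Proof.
  intros Hxs Hxs1 HS HS1 He Hpos HG Hoct.
  set (F := fun x => add (scal (xs x) zz) (scal l (S x))) in *.
  assert (HF : bounded_linear F) by (apply bl_add; auto; apply bl_scal; auto).
  destruct (func_pos X xs e1 Hxs Hxs1 ltac:(lra)) as [x1 [Hx1 V1]].
  pose proof (opnorm_ub _ _ _ x1 (proj2 HG) Hx1) as G1. simpl in G1. rewrite norm_scal in G1.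
  pose proof (func_le1 X xs x1 Hxs Hxs1 Hx1) as L1.
  assert (Gl : (1 - e1) * norm zz <= opnorm (fun x => scal (xs x) zz)).
  { pose proof (norm_nonneg _ zz). rewrite Rabs_right in G1 by lra. nra. }
  destruct (opnorm_approx _ _ F (e1 * (norm zz + Rabs l)) (proj2 HF) ltac:(nra)) as [x [Hx V]].
  assert (Main : (1 - 3*e1)*(norm zz + Rabs l) <= norm (F x)).
  { pose proof (norm_nonneg _ zz). pose proof (Rabs_pos l). nra. }
  assert (Gen : forall x', norm x' <= 1 -> 0 <= xs x' -> (1 - 3*e1)*(norm zz + Rabs l) <= norm (F x') ->
     exists x, norm x <= 1 /\ 0 <= xs x /\ xs x <= 1 /\ norm (S x) <= 1 /\
    (1 - xs x) * norm zz <= 3*e1*(norm zz + Rabs l) /\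
    (1 - norm (S x)) * Rabs l <= 3*e1*(norm zz + Rabs l) /\
    (1 - 3*e1)*(norm zz + Rabs l) <= norm (F x)).
  { intros x' Hx' P' M'. exists x'.
    pose proof (func_le1 X xs x' Hxs Hxs1 Hx') as L'. rewrite Rabs_right in L' by lra.
    pose proof (opnorm_mul _ _ S x' HS) as Sx. rewrite HS1 in Sx.
    assert (NS : norm (S x') <= 1) by nra.
    unfold F in M'. pose proof (norm_triangle _ (scal (xs x') zz) (scal l (S x'))) as T.
    rewrite !norm_scal, (Rabs_right (xs x')) in T by lra.
    pose proof (norm_nonneg _ zz). pose proof (Rabs_pos l). pose proof (norm_nonneg _ (S x')).
    repeat split; auto; nra. }
  destruct (Rle_dec 0 (xs x)) as [P|P].
  - apply (Gen x); auto.
  - apply (Gen (scal (-1) x)).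
    + rewrite norm_opp; auto.
    + rewrite (proj2 (proj1 Hxs)). simpl. lra.
    + rewrite (proj2 (proj1 HF)), norm_opp. auto.
Qed.


Lemma core (X Y : NormedSpace) (H : (X -> Y) -> Prop) :
  closed_subspace_L X Y H ->
  contains_finite_rank X Y H ->
  octahedral_in (Op_VS X Y) H ->
  ~ rough_in (dual_VS X) (in_dual X) ->
  forall n (e : nat -> Y) eps, 0 < eps <= 1/2 ->
  exists y : Y, norm y = 1 /\ forall c l,
    norm (add (lincomb (V:=VS_of Y) n c e) (scal l y)) >= (1 - eps) * (norm (lincomb (V:=VS_of Y) n c e) + Rabs l).
Proof.
  intros Hcl Hfr Hoct Hnr n e eps Heps.
  pose proof (proj1 Hcl) as HinH.
  destruct (Hoct 0%nat (fun _ => fun _ => zero) ltac:(intros; lia) (1/2) ltac:(lra)) as [S0 [HS0 [HS01 _]]].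
  change (opnorm S0 = 1) in HS01.
  destruct (opnorm_approx _ _ S0 (1/2) (proj2 (HinH S0 HS0)) ltac:(lra)) as [xa [_ Hxa]].
  rewrite HS01 in Hxa.
  set (z0 := scal (/ norm (S0 xa)) (S0 xa)).
  assert (Hz0 : norm z0 = 1).
  { unfold z0. rewrite norm_scal, Rabs_right by (left; apply Rinv_0_lt_compat; lra). apply Rinv_l; lra. }
  assert (NR : exists xs, in_dual X xs /\ vnorm (v:=dual_VS X) xs = 1 /\ ~ roughness_ge (dual_VS X) (in_dual X) xs (eps/4)).
  { apply NNPP; intro N; apply Hnr; exists (eps/4); split; [lra|]. intros u Hu Hu1. apply NNPP; intro Nr; apply N; exists u; auto. }
  destruct NR as [xs [Hxs [Hxs1 Hnr']]].
  change (opnorm xs = 1) in Hxs1. unfold in_dual in Hxs.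
  unfold roughness_ge in Hnr'.
  apply not_all_ex_not in Hnr' as [d Hd]. apply imply_to_and in Hd as [Hd Hd2].
  apply not_all_ex_not in Hd2 as [e' He']. apply imply_to_and in He' as [He' He'2].
  assert (SL : forall (x1 x2 : X) al, 0 <= al -> norm x1 <= 1 -> norm x2 <= 1 -> 1 - al <= xs x1 -> 1 - al <= xs x2 ->
     norm (add x1 (scal (-1) x2)) <= eps/4 + 4 * al / d).
  { intros x1 x2 al Hal. apply (slice X xs d e' (eps/4) al Hxs Hd He' ltac:(lra) Hal).
    intros h Hh Hp Hlt. apply Rnot_gt_le. intro G. apply He'2. exists h.
    split; [exact Hh|]. split; [exact Hp|]. split; [exact Hlt|]. exact G. }
  set (K := 1 + 4 / eps).
  assert (HK : 9 <= K).
  { unfold K. assert (8 <= 4 / eps). { apply (Rmult_le_reg_r eps); [lra|]. unfold Rdiv. rewrite Rmult_assoc, Rinv_l by lra. lra. } lra. }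
  assert (Hd4 : 0 <= 4 * K / d) by (apply Rmult_le_pos; [lra| left; apply Rinv_0_lt_compat; lra]).
  set (Q := 1 + K + 4*K/d).
  assert (HQ : 10 <= Q) by (unfold Q; lra).
  set (gam := (3*eps/4) / Q).
  assert (Eg : gam * Q = 3*eps/4) by (unfold gam; field; lra).
  assert (Hg : 0 < gam) by (unfold gam; apply Rdiv_lt_0_compat; lra).
  set (al := gam * K).
  set (dd := eps/4 + 4 * al / d).
  assert (Esum : gam + al + dd = eps).
  { unfold dd, al. replace (4 * (gam * K) / d) with (gam * (4 * K / d)) by (field; lra). unfold Q in Eg. nra. }
  assert (Hal : 2 * gam <= al) by (unfold al; nra).
  assert (Hdd : 0 <= dd) by (unfold dd; unfold al; apply Rplus_le_le_0_compat; [lra|];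
        apply Rmult_le_pos; [nra| left; apply Rinv_0_lt_compat; lra]).
  set (e1 := gam / 3).
  destruct (func_pos X xs al Hxs Hxs1 ltac:(unfold al; nra)) as [x0 [Hx0 Vx0]].
  set (ee := fun i => if Nat.eq_dec i n then z0 else e i).
  set (T := fun i => fun x : X => scal (xs x) (ee i)).
  assert (HT : forall i, (i < S n)%nat -> H (T i)) by (intros; apply Hfr; auto).
  destruct (Hoct (S n) T HT e1 ltac:(unfold e1; lra)) as [Sop [HS [HS1 Oct]]].
  change (opnorm Sop = 1) in HS1.
  pose proof (HinH Sop HS) as HSb.
  assert (Elc : forall c, lincomb (V:=Op_VS X Y) (S n) c T = fun x => scal (xs x) (lincomb (V:=VS_of Y) (S n) c ee)).
  { intro c. apply functional_extensionality. intro x. rewrite LC_eval. unfold T. apply LC_scal. }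
  assert (App : forall c l, 0 < norm (lincomb (V:=VS_of Y) (S n) c ee) + Rabs l ->
    let zz := lincomb (V:=VS_of Y) (S n) c ee in
    exists x, norm x <= 1 /\ 0 <= xs x /\ xs x <= 1 /\ norm (Sop x) <= 1 /\
    (1 - xs x) * norm zz <= 3*e1*(norm zz + Rabs l) /\
    (1 - norm (Sop x)) * Rabs l <= 3*e1*(norm zz + Rabs l) /\
    (1 - 3*e1)*(norm zz + Rabs l) <= norm (add (scal (xs x) zz) (scal l (Sop x)))).
  { intros c l Hpos zz. apply (lemA X Y xs Sop zz l e1 Hxs Hxs1 HSb HS1 ltac:(unfold e1; lra) Hpos).
    - apply HinH. apply Hfr; auto.
    - pose proof (Oct c l) as O. rewrite Elc in O. exact O. }
  set (c0 := fun i => if Nat.eq_dec i n then 1 else 0).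
  assert (Ez0 : lincomb (V:=VS_of Y) (S n) c0 ee = z0).
  { simpl. rewrite LC_zero. unfold c0, ee. destruct (Nat.eq_dec n n) as [_|]; [|lia].
    rewrite scal_one. apply add_zero_l. intros i Hi. unfold c0. destruct (Nat.eq_dec i n); [lia|auto]. }
  assert (Hlin : forall u v, Sop (add u (scal (-1) v)) = add (Sop u) (scal (-1) (Sop v))).
  { intros u v. rewrite (proj1 (proj1 HSb)), (proj2 (proj1 HSb)). auto. }
  assert (Hm : 1/2 <= norm (Sop x0)).
  { destruct (App c0 1) as [x [Hx [P1 [P2 [P3 [P4 [P5 P6]]]]]]].
    - rewrite Ez0, Hz0, Rabs_R1. lra.
    - rewrite Ez0, Hz0, Rabs_R1 in *. unfold e1 in *.
      assert (Sl := SL x x0 al ltac:(unfold al; nra) Hx Hx0 ltac:(lra) ltac:(lra)).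
      pose proof (norm_sub_le _ (Sop x) (Sop x0)) as NS. rewrite <- Hlin in NS.
      pose proof (opnorm_mul _ _ Sop (add x (scal (-1) x0)) HSb) as M. rewrite HS1 in M.
      fold dd in Sl. lra. }
  assert (Hm1 : norm (Sop x0) <= 1).
  { pose proof (opnorm_mul _ _ Sop x0 HSb) as M. rewrite HS1 in M. nra. }
  set (m := norm (Sop x0)) in *.
  exists (scal (/ m) (Sop x0)). split.
  { rewrite norm_scal, Rabs_right by (left; apply Rinv_0_lt_compat; lra). fold m. apply Rinv_l; lra. }
  intros c l.
  set (z := lincomb (V:=VS_of Y) n c e).
  assert (Ny : norm (scal l (scal (/ m) (Sop x0))) = Rabs l).
  { rewrite !norm_scal, (Rabs_right (/ m)) by (left; apply Rinv_0_lt_compat; lra). fold m. rewrite Rinv_l; lra. }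
  pose proof (norm_nonneg _ z) as Nz. pose proof (Rabs_pos l) as Nl.
  destruct (Rle_dec (norm z) (eps/2 * Rabs l)) as [Ca|Ca].
  { pose proof (norm_rev2 _ z (scal l (scal (/ m) (Sop x0)))). rewrite Ny in H0. nra. }
  destruct (Rle_dec (Rabs l) (eps/2 * norm z)) as [Cb|Cb].
  { pose proof (norm_rev _ z (scal l (scal (/ m) (Sop x0)))). rewrite Ny in H0. nra. }
  set (c' := fun i => if Nat.eq_dec i n then 0 else c i).
  assert (Ez : lincomb (V:=VS_of Y) (S n) c' ee = z).
  { simpl. unfold c' at 2. destruct (Nat.eq_dec n n) as [_|]; [|lia]. rewrite scal_zero_l, add_zero.
    apply LC_ext. intros i Hi. unfold c', ee. destruct (Nat.eq_dec i n); [lia|auto]. }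
  set (l' := l / m).
  assert (Hl' : Rabs l <= Rabs l' <= 2 * Rabs l).
  { unfold l'. unfold Rdiv. rewrite Rabs_mult, (Rabs_right (/ m)) by (left; apply Rinv_0_lt_compat; lra).
    assert (1 <= / m <= 2).
    { split.
      - apply (Rmult_le_reg_r m); [lra|]. rewrite Rinv_l; lra.
      - apply (Rmult_le_reg_r m); [lra|]. rewrite Rinv_l; lra. }
    nra. }
  assert (Hzpos : 0 < norm z) by nra.
  destruct (App c' l') as [x [Hx [P1 [P2 [P3 [P4 [P5 P6]]]]]]].
  { rewrite Ez. lra. }
  rewrite Ez in P4, P5, P6. unfold e1 in *. replace (3 * (gam / 3)) with gam in * by field.
  assert (Hs : 1 - xs x <= al).
  { assert (Rabs l' <= 4 / eps * norm z).
    { assert (Rabs l <= 2 / eps * norm z).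
      { apply (Rmult_le_reg_l (eps/2)); [lra|]. replace (eps / 2 * (2 / eps * norm z)) with (norm z) by (field; lra). lra. }
      replace (4 / eps * norm z) with (2 * (2 / eps * norm z)) by (field; lra). lra. }
    apply (Rmult_le_reg_r (norm z)); [lra|].
    assert (gam * (norm z + Rabs l') <= al * norm z).
    { unfold al, K. replace (gam * (1 + 4 / eps) * norm z) with (gam * (norm z + 4 / eps * norm z)) by ring.
      apply Rmult_le_compat_l; lra. }
    lra. }
  assert (Sl := SL x x0 al ltac:(unfold al; nra) Hx Hx0 ltac:(lra) ltac:(lra)). fold dd in Sl.
  pose proof (opnorm_mul _ _ Sop (add x (scal (-1) x0)) HSb) as M. rewrite HS1 in M.
  assert (Ey : scal l (scal (/ m) (Sop x0)) = scal l' (Sop x0)) by (rewrite scal_assoc; auto).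
  rewrite Ey.
  set (u := scal l' (Sop x0)).
  assert (D1 : add (scal (xs x) z) (scal l' (Sop x)) =
     add (add u (scal (xs x) z)) (scal l' (Sop (add x (scal (-1) x0))))).
  { rewrite add_comm, (vec_pert _ _ _ u). f_equal. rewrite Hlin, scal_distr_l. unfold u.
    rewrite !scal_assoc. f_equal. f_equal. ring. }
  assert (D2 : add u (scal (xs x) z) = add (add z u) (scal (xs x - 1) z)).
  { rewrite add_comm, (vec_pert _ _ _ z). f_equal. unfold Rminus. rewrite scal_distr_r. reflexivity. }
  pose proof (norm_triangle _ (add u (scal (xs x) z)) (scal l' (Sop (add x (scal (-1) x0))))) as T1.
  pose proof (norm_triangle _ (add z u) (scal (xs x - 1) z)) as T2.
  rewrite <- D1 in T1. rewrite <- D2 in T2. rewrite !norm_scal in T1, T2.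
  rewrite (Rabs_left1 (xs x - 1)) in T2 by lra.
  rewrite (add_comm _ z u) in T2.
  assert (Ha : Rabs l' * norm (Sop (add x (scal (-1) x0))) <= Rabs l' * dd).
  { apply Rmult_le_compat_l; [apply Rabs_pos|]. lra. }
  assert (Hb : - (xs x - 1) * norm z <= al * norm z) by nra.
  assert (Fin : (1 - eps) * (norm z + Rabs l') <= norm (add u z)).
  { rewrite <- Esum. nra. }
  rewrite add_comm. unfold u. fold u.
  assert ((1 - eps) * (norm z + Rabs l) <= (1 - eps) * (norm z + Rabs l')) by (apply Rmult_le_compat_l; lra).
  lra.
Qed.


Theorem mainTheorem12 (X Y : NormedSpace) (H : (X -> Y) -> Prop) :
  Banach X -> Banach Y ->
  closed_subspace_L X Y H ->
  contains_finite_rank X Y H ->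
  octahedral_in (Op_VS X Y) H ->
  ~ rough_in (dual_VS X) (in_dual X) ->
  octahedral Y.
Proof.
  intros _ _ Hcl Hfr Hoct Hnr. unfold octahedral, octahedral_in. intros n e _ eps Heps.
  assert (Hm : 0 < Rmin eps (1/2) <= 1/2).
  { split; [apply Rmin_glb_lt; lra| apply Rmin_r]. }
  pose proof (Rmin_l eps (1/2)) as Hm2.
  destruct (core X Y H Hcl Hfr Hoct Hnr n e (Rmin eps (1/2)) Hm) as [y [Hy Hc]].
  exists y. split; [exact I|]. split; [exact Hy|]. intros c l. specialize (Hc c l).
  change (norm (add (lincomb (V:=VS_of Y) n c e) (scal l y)) >= (1 - eps) * (norm (lincomb (V:=VS_of Y) n c e) + Rabs l)).
  pose proof (norm_nonneg _ (lincomb (V:=VS_of Y) n c e)). pose proof (Rabs_pos l).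
  assert ((1 - eps) * (norm (lincomb (V:=VS_of Y) n c e) + Rabs l) <= (1 - Rmin eps (1/2)) * (norm (lincomb (V:=VS_of Y) n c e) + Rabs l))
    by (apply Rmult_le_compat_r; lra).
  lra.
Qed.
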